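(* Let $a$ and $b$ be coprime positive integers, and put $N = a\left\lfloor \frac{b}{2}\right\rfloor + b\left\lfloor \frac{a}{2}\right\rfloor$. Let $R(a,b)$ be the set of integers $n$ with $0 \le n \le N$ such that $n = ax+by$ for some nonnegative integers $x,y$, and let $\mathrm{NR}(a,b)$ be the set of nonnegative integers that cannot be written as $ax+by$ with $x,y$ nonnegative integers. Then \[ R(a,b) = \left\{ai+bj : 0 \le i \le \Big\lfloor \frac{b}{2}\Big\rfloor,\ 0 \le j \le \Big\lfloor \frac{a}{2}\Big\rfloor \right\} \cup \left\{ N - |ai-bj| : 1 \le i \le \Big\lfloor \frac{b}{2}\Big\rfloor,\ 1 \le j \le \Big\lfloor \frac{a}{2}\Big\rfloor \right\}, \] and \[ \mathrm{NR}(a,b) = \{0,1,2,\dots,N\} \setminus R(a,b). \]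
   Context: A nonnegative integer is called representable (with respect to $a,b$) if it equals $ax+by$ for some nonnegative integers $x$ and $y$, and nonrepresentable otherwise. $\lfloor \cdot \rfloor$ denotes the floor function. *)

(* Defs.v *)
From mathcomp Require Import all_boot all_order all_algebra.
Set Implicit Arguments. Unset Strict Implicit. Unset Printing Implicit Defensive.

Definition representable (a b n : nat) : Prop :=
  exists x y : nat, n = a * x + b * y.

Definition bigN (a b : nat) : nat := a * b./2 + b * a./2.

Definition Rset (a b : nat) (n : nat) : Prop :=
  n <= bigN a b /\ representable a b n.

Definition NRset (a b : nat) (n : nat) : Prop := ~ representable a b n.

Definition S1 (a b : nat) (n : nat) : Prop :=
  exists i j : nat, i <= b./2 /\ j <= a./2 /\ n = a * i + b * j.

Definition S2 (a b : nat) (n : nat) : Prop :=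
  exists i j : nat, [/\ 1 <= i <= b./2, 1 <= j <= a./2 &
    (n%:Z = (bigN a b)%:Z - `|(a * i)%:Z - (b * j)%:Z|%R)%R].

(* Main.v *)
Require Import Defs.
From mathcomp Require Import all_boot all_order all_algebra.
From mathcomp Require Import zify.

Lemma half_bounds (b : nat) : b./2 + b./2 <= b /\ b <= b./2 + b./2 + 1.
Proof.
have := odd_double_half b; rewrite -addnn.
have := leq_b1 (odd b). lia.
Qed.

Lemma frob (a b n : nat) : 0 < a -> 0 < b -> coprime a b ->
  a * b < n + a + b -> representable a b n.
Proof.
move=> ha hb cab hn.
set m := chinese a b 0 n.
have hm1 : m %% a = 0 by rewrite chinese_modl // mod0n.
have hm2 : m %% b = n %% b by rewrite chinese_modr.
have [k hk] : exists k, m = k * a by exists (m %/ a); rewrite {1}(divn_eq m a) hm1 addn0.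
set x := k %% b.
have hx : x < b by rewrite ltn_mod.
have hxm : a * x = n %[mod b].
  by rewrite -hm2 hk mulnC /x modnMml.
have hxle : a * x <= n.
  case: (leqP (a * x) n) => // hlt.
  have hd : b %| a * x - n.
    by rewrite -eqn_mod_dvd ?hxm // ltnW.
  have := dvdn_leq _ hd. rewrite subn_gt0 hlt => /(_ isT) hle.
  have hab1 : a * x <= a * (b - 1) by apply: leq_mul => //; clear -hx; lia.
  rewrite mulnBr muln1 in hab1.
  clearbody x; clear -hab1 hle hn hlt ha hb; lia.
have hd : b %| n - a * x by rewrite -eqn_mod_dvd // hxm.
exists x, ((n - a * x) %/ b).
by rewrite [b * _]mulnC divnK // subnKC.
Qed.

Theorem theorem4 (a b : nat) (ha : 0 < a) (hb : 0 < b) (hab : coprime a b) :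
  (forall n : nat, Rset a b n <-> (S1 a b n \/ S2 a b n)) /\
  (forall n : nat, NRset a b n <-> (n <= bigN a b /\ ~ Rset a b n)).
Proof.
have [hB1 hB2] := half_bounds b.
have [hA1 hA2] := half_bounds a.
rewrite /Rset /NRset /S1 /S2 /bigN /representable.
move: hB1 hB2 hA1 hA2; set B := b./2; set A := a./2 => hB1 hB2 hA1 hA2.
split=> n; split.
- case=> hn [x [y en]]; subst n.
  have [x1 [y1 [hx1 e1]]] : exists x1 y1, x1 < b /\ a * x + b * y = a * x1 + b * y1.
    exists (x %% b), (y + a * (x %/ b)); split; first by rewrite ltn_mod.
    rewrite {1}(divn_eq x b). lia.
  rewrite e1 in hn *; clear e1.
  move: x1 y1 hx1 hn => {x y} x y hx hn.
  case: (leqP x B) => hxB; case: (leqP y A) => hyA.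
  + by left; exists x, y.
  + right; exists (B - x), (y - A).
    have h1 : b * A < b * y by rewrite ltn_pmul2l.
    have hxB' : x < B.
      case: (ltnP x B) => // h; have ? : a * B <= a * x by exact: leq_mul.
      lia.
    have h2 : a * x <= a * B by exact: leq_mul.
    have hj : y - A <= A.
      case: (leqP (y - A) A) => // h.
      have h3 : b * (A + A + 1) <= b * y by apply: leq_mul => //; lia.
      have h4 : a * b <= (A + A + 1) * b by apply: leq_mul => //; lia.
      have h5 : a * (B + B) <= a * b by apply: leq_mul => //; lia.
      lia.
    have e1 : a * (B - x) = a * B - a * x by rewrite mulnBr.
    have e2 : b * (y - A) = b * y - b * A by rewrite mulnBr.
    split; [lia | lia | rewrite e1 e2; lia].
  + right; exists (x - B), (A - y).
    have h1 : a * B < a * x by rewrite ltn_pmul2l.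
    have hyA' : y < A.
      case: (ltnP y A) => // h; have ? : b * A <= b * y by exact: leq_mul.
      lia.
    have h2 : b * y <= b * A by exact: leq_mul.
    have e1 : a * (x - B) = a * x - a * B by rewrite mulnBr.
    have e2 : b * (A - y) = b * A - b * y by rewrite mulnBr.
    split; [lia | lia | rewrite e1 e2; lia].
  + exfalso.
    have h1 : a * B < a * x by rewrite ltn_pmul2l.
    have h2 : b * A < b * y by rewrite ltn_pmul2l.
    lia.
- case.
  + case=> i [j [hi [hj ->]]]; split.
      have ? : a * i <= a * B by exact: leq_mul.
      have ? : b * j <= b * A by exact: leq_mul.
      lia.
    by exists i, j.
  + case=> i [j [hi hj hn]].
    have h1 : a * i <= a * B by apply: leq_mul => //; lia.
    have h2 : b * j <= b * A by apply: leq_mul => //; lia.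
    case: (leqP (b * j) (a * i)) => h.
    * have e : n + a * i = a * B + b * A + b * j by lia.
      split; first lia.
      exists (B - i), (A + j). rewrite mulnBr mulnDr. lia.
    * have e : n + b * j = a * B + b * A + a * i by lia.
      split; first lia.
      exists (B + i), (A - j). rewrite mulnBr mulnDr. lia.
- move=> hnr; split; last by case.
  case: (leqP n (a * B + b * A)) => // hlt; exfalso; apply: hnr.
  apply: frob => //.
  have h4 : a * b <= (A + A + 1) * b by apply: leq_mul => //; lia.
  have h5 : a * b <= a * (B + B + 1) by apply: leq_mul => //; lia.
  lia.
- by case=> hn hR hr; apply: hR.
Qed.
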